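(* Let $\mathcal{D}$ be a finite set of disks in the plane, and let $(C_1,C_2)$ be a pair of congruent disks of smallest possible common radius such that every $D\in\mathcal{D}$ intersects $C_1$ or $C_2$. Assume the centers of $C_1$ and $C_2$ are distinct and let $\ell$ be the perpendicular bisector of the segment connecting them. Then for $i\in\{1,2\}$, $C_i\cap D\neq\emptyset$ for every $D\in\mathcal{D}$ whose center lies on the same (closed) side of $\ell$ as the center of $C_i$.
   Context: Disks are closed disks in the plane. The paper assumes throughout that no disk of $\mathcal{D}$ contains another disk of $\mathcal{D}$. *)

(* Defs.v *)
From Stdlib Require Import Reals List.
Open Scope R_scope.

Definition point := (R * R)%type.

(* A closed disk: center and radius (radius >= 0 required where used). *)
Record disk := mkDisk { center : point; radius : R }.

Definition dist2 (p q : point) : R :=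
  (fst p - fst q) * (fst p - fst q) + (snd p - snd q) * (snd p - snd q).

Definition in_disk (D : disk) (p : point) : Prop :=
  dist2 p (center D) <= radius D * radius D.

Definition intersects (D E : disk) : Prop :=
  exists p, in_disk D p /\ in_disk E p.

Definition disk_contains (D E : disk) : Prop :=
  forall p, in_disk E p -> in_disk D p.

Definition valid_family (Ds : list disk) : Prop :=
  (forall D, In D Ds -> 0 <= radius D) /\
  (forall D E, In D Ds -> In E Ds -> D <> E -> ~ disk_contains D E).

Definition stabs2 (Ds : list disk) (c1 c2 : point) (r : R) : Prop :=
  forall D, In D Ds -> intersects (mkDisk c1 r) D \/ intersects (mkDisk c2 r) D.

Definition optimal_pair (Ds : list disk) (c1 c2 : point) (r : R) : Prop :=
  0 <= r /\ stabs2 Ds c1 c2 r /\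
  (forall c1' c2' r', 0 <= r' -> stabs2 Ds c1' c2' r' -> r <= r').

(* Closed side of the perpendicular bisector of [a b] that contains a:
   points p with (p - m) . (a - b) >= 0, m the midpoint of [a b]. *)
Definition bisector_side (a b p : point) : Prop :=
  let m := ((fst a + fst b) / 2, (snd a + snd b) / 2) in
  (fst p - fst m) * (fst a - fst b) + (snd p - snd m) * (snd a - snd b) >= 0.

(* Main.v *)
Require Import Defs.
From Stdlib Require Import Reals List Lra Psatz.
Open Scope R_scope.

Lemma key (c1 c2 : point) (r : R) (D : disk) :
  c1 <> c2 -> bisector_side c1 c2 (center D) ->
  intersects (mkDisk c2 r) D -> intersects (mkDisk c1 r) D.
Proof.
  destruct c1 as [x1 y1], c2 as [x2 y2], D as [[px py] rD].
  unfold bisector_side, intersects, in_disk, dist2; simpl.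
  intros Hne Hs [[qx qy] [Hq1 Hq2]]; simpl in *.
  set (a := x1 - x2). set (b := y1 - y2).
  assert (HN : a*a + b*b > 0).
  { destruct (Req_dec a 0), (Req_dec b 0).
    - exfalso; apply Hne; f_equal; unfold a, b in *; lra.
    - nra. - nra. - nra. }
  set (sq := (qx - (x1 + x2)/2) * a + (qy - (y1+y2)/2) * b).
  set (sp := (px - (x1 + x2)/2) * a + (py - (y1+y2)/2) * b).
  assert (Hsp : sp >= 0) by (unfold sp, a, b; lra).
  destruct (Rle_or_lt 0 sq) as [Hsq|Hsq].
  - exists (qx, qy); simpl; split; [|lra].
    assert (E : (qx - x2) * (qx - x2) + (qy - y2) * (qy - y2)
              - ((qx - x1) * (qx - x1) + (qy - y1) * (qy - y1)) = 2 * sq)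
      by (unfold sq, a, b; field).
    lra.
  - set (t := 2 * sq / (a*a+b*b)).
    exists (qx - t * a, qy - t * b); simpl; split.
    + assert (E : (qx - t * a - x1) * (qx - t * a - x1) + (qy - t * b - y1) * (qy - t * b - y1)
         = (qx - x2) * (qx - x2) + (qy - y2) * (qy - y2)).
      { unfold t, sq, a, b in *. field. lra. }
      lra.
    + assert (E : (px - (qx - t * a)) * (px - (qx - t * a)) + (py - (qy - t * b)) * (py - (qy - t * b))
         = (qx - px) * (qx - px) + (qy - py) * (qy - py) + 4 * sq * sp / (a*a+b*b)).
      { unfold t, sp, sq. field. lra. }
      assert (0 <= - (4 * sq * sp) / (a*a+b*b)).
      { unfold Rdiv. apply Rmult_le_pos; [nra|]. left; apply Rinv_0_lt_compat; lra. }
      assert (Hd : 4 * sq * sp / (a*a+b*b) = - (- (4 * sq * sp) / (a*a+b*b))) by (field; lra).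
      nra.
Qed.

Theorem mainTheorem13 (Ds : list disk) (c1 c2 : point) (r : R) :
  valid_family Ds ->
  optimal_pair Ds c1 c2 r ->
  c1 <> c2 ->
  (forall D, In D Ds -> bisector_side c1 c2 (center D) ->
     intersects (mkDisk c1 r) D) /\
  (forall D, In D Ds -> bisector_side c2 c1 (center D) ->
     intersects (mkDisk c2 r) D).
Proof.
  intros _ [_ [Hst _]] Hne; split; intros D HD Hs;
  destruct (Hst D HD) as [H|H]; auto.
  - eapply key; eauto.
  - eapply key; eauto.
Qed.
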